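(* For every semigroup $S$ and every endomorphism $\theta$ of $S$, the Bruck--Reilly extension $\mathsf{BR}(S,\theta)$ is not DSC.
   Context: $\mathsf{BR}(S,\theta)$ is the set $\mathbb{N}_0\times S\times\mathbb{N}_0$ with multiplication $(m,s,n)(p,t,q)=(m-n+k,\ (s\theta^{k-n})(t\theta^{k-p}),\ q-p+k)$ where $k=\max(n,p)$ and $\theta^0$ is the identity map. For a semigroup $T$, a diagonal subsemigroup of $T\times T$ is a subsemigroup containing $\{(t,t)\colon t\in T\}$; a congruence is a symmetric and transitive diagonal subsemigroup; $T$ is DSC if every diagonal subsemigroup of $T\times T$ is a congruence on $T$. *)

(* Defs.v *)
From Stdlib Require Import Arith.

Definition associative {T : Type} (op : T -> T -> T) : Prop :=
  forall x y z, op x (op y z) = op (op x y) z.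

Definition is_endomorphism {S : Type} (op : S -> S -> S) (theta : S -> S) : Prop :=
  forall x y, theta (op x y) = op (theta x) (theta y).

Fixpoint iter_map {S : Type} (k : nat) (theta : S -> S) (x : S) : S :=
  match k with
  | O => x
  | Datatypes.S k' => theta (iter_map k' theta x)
  end.

(* Bruck--Reilly extension BR(S, theta) on N0 x S x N0:
   (m,s,n)(p,t,q) = (m-n+k, (s theta^{k-n})(t theta^{k-p}), q-p+k), k = max(n,p).
   Since k >= n and k >= p, m - n + k = m + (k - n) and q - p + k = q + (k - p). *)
Definition BR_mul {S : Type} (op : S -> S -> S) (theta : S -> S)
  (x y : nat * S * nat) : nat * S * nat :=
  let '(m, s, n) := x in
  let '(p, t, q) := y in
  let k := Nat.max n p in
  (m + (k - n), op (iter_map (k - n) theta s) (iter_map (k - p) theta t), q + (k - p)).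

Definition diagonal_subsemigroup {T : Type} (op : T -> T -> T) (rho : T -> T -> Prop) : Prop :=
  (forall t, rho t t) /\
  (forall a b c d, rho a b -> rho c d -> rho (op a c) (op b d)).

Definition congruence {T : Type} (op : T -> T -> T) (rho : T -> T -> Prop) : Prop :=
  diagonal_subsemigroup op rho /\
  (forall a b, rho a b -> rho b a) /\
  (forall a b c, rho a b -> rho b c -> rho a c).

Definition DSC {T : Type} (op : T -> T -> T) : Prop :=
  forall rho : T -> T -> Prop, diagonal_subsemigroup op rho -> congruence op rho.

(* Main.v *)
Require Import Defs.
From Stdlib Require Import Arith ZArith Lia.

Definition phiZ {S : Type} (x : nat * S * nat) : Z :=
  let '(m, _, n) := x in (Z.of_nat m - Z.of_nat n)%Z.

Lemma phiZ_mul {S : Type} (op : S -> S -> S) (theta : S -> S) a c :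
  phiZ (BR_mul op theta a c) = (phiZ a + phiZ c)%Z.
Proof.
  destruct a as [[m s] n], c as [[p t] q]; simpl.
  destruct (Nat.max_spec n p) as [[H1 H2]|[H1 H2]]; rewrite H2; lia.
Qed.

Theorem mainTheorem11 (S : Type) (op : S -> S -> S) (theta : S -> S)
  (s0 : S) (Hassoc : associative op) (Htheta : is_endomorphism op theta) :
  ~ DSC (BR_mul op theta).
Proof.
  intro H.
  assert (Hd : diagonal_subsemigroup (BR_mul op theta)
                 (fun x y => (phiZ x <= phiZ y)%Z)).
  { split; [intro; lia|].
    intros a b c d H1 H2. rewrite !phiZ_mul. lia. }
  destruct (H _ Hd) as [_ [Hs _]].
  specialize (Hs (0, s0, 0) (1, s0, 0)). simpl in Hs. lia.
Qed.
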